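(* Let $\alpha,\beta,\gamma\in\mathbb{F}\setminus\{\frac12\}$, and let $\mathbf{A}$ be the 5-dimensional LV algebra with natural basis $e_1,\dots,e_5$ in which $e_1e_2=\alpha e_1+(1-\alpha)e_2$, $e_2e_3=\beta e_2+(1-\beta)e_3$, $e_3e_4=\gamma e_3+(1-\gamma)e_4$, and $e_ie_j=\frac12(e_i+e_j)$ for all other pairs $i,j$. Then $\mathrm{Der}(\mathbf{A})=\{0\}$.
   Context: Let $\mathbb{F}$ be a field of characteristic different from $2$. A Lotka–Volterra (LV) algebra of dimension $5$ over $\mathbb{F}$ is a commutative (not necessarily associative) $\mathbb{F}$-algebra $\mathbf{A}$ with a basis $e_1,\dots,e_5$ (the natural basis) such that $e_ie_j=\alpha_{ij}e_i+\alpha_{ji}e_j$ with $\alpha_{ij}\in\mathbb{F}$, $\alpha_{ii}=\frac12$ and $\alpha_{ij}+\alpha_{ji}=1$ for all $i,j$. A derivation is a linear map $D:\mathbf{A}\to\mathbf{A}$ with $D(uv)=D(u)v+uD(v)$ for all $u,v$; $\mathrm{Der}(\mathbf{A})$ is the set of derivations. *)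

(* Defs.v *)
From HB Require Import structures.
From mathcomp Require Import all_boot all_order all_algebra.
Set Implicit Arguments. Unset Strict Implicit. Unset Printing Implicit Defensive.
Import Order.TTheory GRing.Theory Num.Theory.
Local Open Scope ring_scope.

(* Vectors of the 5-dim algebra are row vectors 'rV[F]_5 in the coordinates of
   the natural basis e_1..e_5 (indexed 0..4). *)

Definition is_LV (F : fieldType) (n : nat) (a : 'M[F]_n) : Prop :=
  (forall i, a i i = 2%:R^-1) /\ (forall i j, a i j + a j i = 1).

(* The bilinear product with e_i e_j = a_ij e_i + a_ji e_j. *)
Definition lv_mul (F : fieldType) (n : nat) (a : 'M[F]_n) (u v : 'rV[F]_n)
  : 'rV[F]_n :=
  \row_k \sum_(i < n) \sum_(j < n)
      u 0 i * v 0 j * (a i j * (k == i)%:R + a j i * (k == j)%:R).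

Definition is_derivation (F : fieldType) (n : nat) (a : 'M[F]_n)
  (D : 'rV[F]_n -> 'rV[F]_n) : Prop :=
  (forall u v, D (u + v) = D u + D v) /\
  (forall (c : F) u, D (c *: u) = c *: D u) /\
  (forall u v, D (lv_mul a u v) = lv_mul a (D u) v + lv_mul a u (D v)).

Definition alpha5 (F : fieldType) (al be ga : F) : 'M[F]_5 :=
  \matrix_(i, j)
    if (val i == 0%N) && (val j == 1%N) then al
    else if (val i == 1%N) && (val j == 0%N) then 1 - al
    else if (val i == 1%N) && (val j == 2%N) then be
    else if (val i == 2%N) && (val j == 1%N) then 1 - be
    else if (val i == 2%N) && (val j == 3%N) then ga
    else if (val i == 3%N) && (val j == 2%N) then 1 - ga
    else 2%:R^-1.

(* Main.v *)
Require Import Defs.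
From HB Require Import structures.
From mathcomp Require Import all_boot all_order all_algebra.
From mathcomp Require Import ring.
Import GRing.Theory.
Local Open Scope ring_scope.

Definition e5 (F : fieldType) (i : 'I_5) : 'rV[F]_5 := delta_mx 0 i.
Definition dd (F : fieldType) (D : 'rV[F]_5 -> 'rV[F]_5) (i k : 'I_5) := D (e5 F i) 0 k.
Arguments dd {F} D i k : simpl never.
Notation o0 := (@Ordinal 5 0 isT).
Notation o1 := (@Ordinal 5 1 isT).
Notation o2 := (@Ordinal 5 2 isT).
Notation o3 := (@Ordinal 5 3 isT).
Notation o4 := (@Ordinal 5 4 isT).

Lemma sum5 (V : zmodType) (f : 'I_5 -> V) :
  \sum_(k < 5) f k = f o0 + f o1 + f o2 + f o3 + f o4.
Proof.
rewrite !big_ord_recl big_ord0 addr0 !addrA.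
by congr (_ + _ + _ + _ + _); congr f; apply: val_inj.
Qed.

Lemma lvm_e_l (F: fieldType) n (a : 'M[F]_n) (i : 'I_n) v m :
 lv_mul a (delta_mx 0 i) v 0 m = \sum_j v 0 j * (a i j * (m==i)%:R + a j i * (m==j)%:R).
Proof.
rewrite mxE (bigD1 i) //= [X in _ + X = _]big1 ?addr0.
  by apply: eq_bigr => j _; rewrite mxE !eqxx mul1r.
move=> i' /negbTE ne; apply: big1 => j _; by rewrite mxE ne andbF !mul0r.
Qed.

Lemma lvm_e_r (F: fieldType) n (a : 'M[F]_n) (j : 'I_n) v m :
 lv_mul a v (delta_mx 0 j) 0 m = \sum_i v 0 i * (a i j * (m==i)%:R + a j i * (m==j)%:R).
Proof.
rewrite mxE; apply: eq_bigr => i _; rewrite (bigD1 j) //= [X in _ + X = _]big1 ?addr0.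
  by rewrite mxE !eqxx mulr1.
move=> j' /negbTE ne; by rewrite mxE ne andbF mulr0 mul0r.
Qed.

Lemma lvm_ee (F: fieldType) n (a : 'M[F]_n) (i j : 'I_n) :
  lv_mul a (delta_mx 0 i) (delta_mx 0 j) = a i j *: delta_mx 0 i + a j i *: delta_mx 0 j.
Proof.
apply/rowP => m; rewrite lvm_e_l (bigD1 j) //= [X in _ + X = _]big1 ?addr0.
  by rewrite !mxE !eqxx mul1r.
move=> j' /negbTE ne; by rewrite mxE ne andbF !mul0r.
Qed.

Definition b2F (F : fieldType) (b : bool) : F := if b then 1 else 0.
Arguments b2F {F} b : simpl never.
Lemma b2F_nat (F : fieldType) (b : bool) : (b%:R : F) = b2F b. Proof. by case: b. Qed.
Lemma b2FT (F : fieldType) : b2F true = 1 :> F. Proof. by []. Qed.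
Lemma b2FF (F : fieldType) : b2F false = 0 :> F. Proof. by []. Qed.

Lemma Gl (F : fieldType) (a : 'M[F]_5) D : is_derivation a D -> forall i j m : 'I_5,
  a i j * dd D i m + a j i * dd D j m =
  \sum_k dd D i k * (a k j * (m==k)%:R + a j k * (m==j)%:R) +
  \sum_k dd D j k * (a i k * (m==i)%:R + a k i * (m==k)%:R).
Proof.
move=> [hadd [hsc hmul]] i j m.
have := congr1 (fun w : 'rV[F]_5 => w 0 m) (hmul (e5 F i) (e5 F j)).
rewrite /e5 lvm_ee hadd !hsc [in X in _ = X]mxE lvm_e_r lvm_e_l !mxE => ->.
done.
Qed.

Arguments Gl {F a D}.


Lemma lc1 (F : fieldType) (k : F) {x y t : F} : x = y -> t = k * (x - y) -> t = 0.
Proof. by move=> -> ->; rewrite subrr mulr0. Qed.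
Lemma lc2 (F : fieldType) (k1 k2 : F) {x1 y1 x2 y2 t : F} :
  x1 = y1 -> x2 = y2 -> t = k1 * (x1 - y1) + k2 * (x2 - y2) -> t = 0.
Proof. by move=> -> -> ->; rewrite !subrr !mulr0 addr0. Qed.
Lemma nz (F : fieldType) (c x : F) : c != 0 -> c * x = 0 -> x = 0.
Proof. by move=> hc /eqP; rewrite mulf_eq0 (negbTE hc) /= => /eqP. Qed.

Arguments nz {F c x}.
Arguments lc1 {F} k {x y t}.
Arguments lc2 {F} k1 k2 {x1 y1 x2 y2 t}.
Lemma ord5 (k : 'I_5) : k = o0 \/ k = o1 \/ k = o2 \/ k = o3 \/ k = o4.
Proof.
case: k => [[|[|[|[|[|k]]]]] Hk] //.
- by left; apply: val_inj.
- by right; left; apply: val_inj.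
- by do 2 right; left; apply: val_inj.
- by do 3 right; left; apply: val_inj.
- by do 4 right; apply: val_inj.
Qed.
Ltac mkE hD name i j m := have name := Gl hD i j m; rewrite !sum5 !b2F_nat /alpha5 !mxE /= ?b2FT ?b2FF in name.

Theorem mainTheorem13 (F : fieldType) (al be ga : F)
  (hchar : (2%:R : F) != 0)
  (hal : al != 2%:R^-1) (hbe : be != 2%:R^-1) (hga : ga != 2%:R^-1)
  (D : 'rV[F]_5 -> 'rV[F]_5) :
  is_derivation (alpha5 al be ga) D -> forall u, D u = 0.
Proof.
move=> hD.
have hp : al - 2%:R^-1 != 0 by rewrite subr_eq0.
have hq : be - 2%:R^-1 != 0 by rewrite subr_eq0.
have hr : ga - 2%:R^-1 != 0 by rewrite subr_eq0.
have h1 : (1 : F) != 0 := oner_neq0 F.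
have E0 := Gl hD o0 o0 o1; rewrite !sum5 !b2F_nat /alpha5 !mxE /= ?b2FT ?b2FF in E0.
have z01 : dd D o0 o1 = 0.
  apply: (nz hp); apply: (lc1 (2^-1) E0); field; exact: hchar.
clear E0.
have E0 := Gl hD o1 o1 o0; rewrite !sum5 !b2F_nat /alpha5 !mxE /= ?b2FT ?b2FF in E0.
rewrite ?z01 in E0.
have z10 : dd D o1 o0 = 0.
  apply: (nz hp); apply: (lc1 (-2^-1) E0); field; exact: hchar.
clear E0.
have E0 := Gl hD o1 o1 o2; rewrite !sum5 !b2F_nat /alpha5 !mxE /= ?b2FT ?b2FF in E0.
rewrite ?z01 ?z10 in E0.
have z12 : dd D o1 o2 = 0.
  apply: (nz hq); apply: (lc1 (2^-1) E0); field; exact: hchar.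
clear E0.
have E0 := Gl hD o2 o2 o1; rewrite !sum5 !b2F_nat /alpha5 !mxE /= ?b2FT ?b2FF in E0.
rewrite ?z01 ?z10 ?z12 in E0.
have z21 : dd D o2 o1 = 0.
  apply: (nz hq); apply: (lc1 (-2^-1) E0); field; exact: hchar.
clear E0.
have E0 := Gl hD o2 o2 o3; rewrite !sum5 !b2F_nat /alpha5 !mxE /= ?b2FT ?b2FF in E0.
rewrite ?z01 ?z10 ?z12 ?z21 in E0.
have z23 : dd D o2 o3 = 0.
  apply: (nz hr); apply: (lc1 (2^-1) E0); field; exact: hchar.
clear E0.
have E0 := Gl hD o3 o3 o2; rewrite !sum5 !b2F_nat /alpha5 !mxE /= ?b2FT ?b2FF in E0.
rewrite ?z01 ?z10 ?z12 ?z21 ?z23 in E0.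
have z32 : dd D o3 o2 = 0.
  apply: (nz hr); apply: (lc1 (-2^-1) E0); field; exact: hchar.
clear E0.
have E0 := Gl hD o0 o2 o2; rewrite !sum5 !b2F_nat /alpha5 !mxE /= ?b2FT ?b2FF in E0.
rewrite ?z01 ?z10 ?z12 ?z21 ?z23 ?z32 in E0.
have E1 := Gl hD o0 o4 o4; rewrite !sum5 !b2F_nat /alpha5 !mxE /= ?b2FT ?b2FF in E1.
rewrite ?z01 ?z10 ?z12 ?z21 ?z23 ?z32 in E1.
have z03 : dd D o0 o3 = 0.
  apply: (nz hr); apply: (lc2 (-1) (1) E0 E1); field; exact: hchar.
clear E0 E1.
have E0 := Gl hD o0 o3 o3; rewrite !sum5 !b2F_nat /alpha5 !mxE /= ?b2FT ?b2FF in E0.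
rewrite ?z01 ?z10 ?z12 ?z21 ?z23 ?z32 ?z03 in E0.
have E1 := Gl hD o0 o4 o4; rewrite !sum5 !b2F_nat /alpha5 !mxE /= ?b2FT ?b2FF in E1.
rewrite ?z01 ?z10 ?z12 ?z21 ?z23 ?z32 ?z03 in E1.
have z02 : dd D o0 o2 = 0.
  apply: (nz hr); apply: (lc2 (1) (-1) E0 E1); field; exact: hchar.
clear E0 E1.
have E0 := Gl hD o0 o1 o1; rewrite !sum5 !b2F_nat /alpha5 !mxE /= ?b2FT ?b2FF in E0.
rewrite ?z01 ?z10 ?z12 ?z21 ?z23 ?z32 ?z03 ?z02 in E0.
have E1 := Gl hD o0 o4 o4; rewrite !sum5 !b2F_nat /alpha5 !mxE /= ?b2FT ?b2FF in E1.
rewrite ?z01 ?z10 ?z12 ?z21 ?z23 ?z32 ?z03 ?z02 in E1.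
have z00 : dd D o0 o0 = 0.
  apply: (nz hp); apply: (lc2 (1) (-1) E0 E1); field; exact: hchar.
clear E0 E1.
have E0 := Gl hD o0 o4 o4; rewrite !sum5 !b2F_nat /alpha5 !mxE /= ?b2FT ?b2FF in E0.
rewrite ?z01 ?z10 ?z12 ?z21 ?z23 ?z32 ?z03 ?z02 ?z00 in E0.
have z04 : dd D o0 o4 = 0.
  apply: (nz h1); apply: (lc1 (-2) E0); field; exact: hchar.
clear E0.
have E0 := Gl hD o1 o0 o0; rewrite !sum5 !b2F_nat /alpha5 !mxE /= ?b2FT ?b2FF in E0.
rewrite ?z01 ?z10 ?z12 ?z21 ?z23 ?z32 ?z03 ?z02 ?z00 ?z04 in E0.
have E1 := Gl hD o1 o4 o4; rewrite !sum5 !b2F_nat /alpha5 !mxE /= ?b2FT ?b2FF in E1.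
rewrite ?z01 ?z10 ?z12 ?z21 ?z23 ?z32 ?z03 ?z02 ?z00 ?z04 in E1.
have z11 : dd D o1 o1 = 0.
  apply: (nz hp); apply: (lc2 (-1) (1) E0 E1); field; exact: hchar.
clear E0 E1.
have E0 := Gl hD o1 o2 o2; rewrite !sum5 !b2F_nat /alpha5 !mxE /= ?b2FT ?b2FF in E0.
rewrite ?z01 ?z10 ?z12 ?z21 ?z23 ?z32 ?z03 ?z02 ?z00 ?z04 ?z11 in E0.
have E1 := Gl hD o1 o4 o4; rewrite !sum5 !b2F_nat /alpha5 !mxE /= ?b2FT ?b2FF in E1.
rewrite ?z01 ?z10 ?z12 ?z21 ?z23 ?z32 ?z03 ?z02 ?z00 ?z04 ?z11 in E1.
have z13 : dd D o1 o3 = 0.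
  apply: (nz hr); apply: (lc2 (-1) (1) E0 E1); field; exact: hchar.
clear E0 E1.
have E0 := Gl hD o1 o4 o4; rewrite !sum5 !b2F_nat /alpha5 !mxE /= ?b2FT ?b2FF in E0.
rewrite ?z01 ?z10 ?z12 ?z21 ?z23 ?z32 ?z03 ?z02 ?z00 ?z04 ?z11 ?z13 in E0.
have z14 : dd D o1 o4 = 0.
  apply: (nz h1); apply: (lc1 (-2) E0); field; exact: hchar.
clear E0.
have E0 := Gl hD o2 o3 o3; rewrite !sum5 !b2F_nat /alpha5 !mxE /= ?b2FT ?b2FF in E0.
rewrite ?z01 ?z10 ?z12 ?z21 ?z23 ?z32 ?z03 ?z02 ?z00 ?z04 ?z11 ?z13 ?z14 in E0.
have E1 := Gl hD o2 o4 o4; rewrite !sum5 !b2F_nat /alpha5 !mxE /= ?b2FT ?b2FF in E1.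
rewrite ?z01 ?z10 ?z12 ?z21 ?z23 ?z32 ?z03 ?z02 ?z00 ?z04 ?z11 ?z13 ?z14 in E1.
have z22 : dd D o2 o2 = 0.
  apply: (nz hr); apply: (lc2 (1) (-1) E0 E1); field; exact: hchar.
clear E0 E1.
have E0 := Gl hD o2 o1 o1; rewrite !sum5 !b2F_nat /alpha5 !mxE /= ?b2FT ?b2FF in E0.
rewrite ?z01 ?z10 ?z12 ?z21 ?z23 ?z32 ?z03 ?z02 ?z00 ?z04 ?z11 ?z13 ?z14 ?z22 in E0.
have E1 := Gl hD o2 o4 o4; rewrite !sum5 !b2F_nat /alpha5 !mxE /= ?b2FT ?b2FF in E1.
rewrite ?z01 ?z10 ?z12 ?z21 ?z23 ?z32 ?z03 ?z02 ?z00 ?z04 ?z11 ?z13 ?z14 ?z22 in E1.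
have z20 : dd D o2 o0 = 0.
  apply: (nz hp); apply: (lc2 (1) (-1) E0 E1); field; exact: hchar.
clear E0 E1.
have E0 := Gl hD o2 o4 o4; rewrite !sum5 !b2F_nat /alpha5 !mxE /= ?b2FT ?b2FF in E0.
rewrite ?z01 ?z10 ?z12 ?z21 ?z23 ?z32 ?z03 ?z02 ?z00 ?z04 ?z11 ?z13 ?z14 ?z22 ?z20 in E0.
have z24 : dd D o2 o4 = 0.
  apply: (nz h1); apply: (lc1 (-2) E0); field; exact: hchar.
clear E0.
have E0 := Gl hD o3 o0 o0; rewrite !sum5 !b2F_nat /alpha5 !mxE /= ?b2FT ?b2FF in E0.
rewrite ?z01 ?z10 ?z12 ?z21 ?z23 ?z32 ?z03 ?z02 ?z00 ?z04 ?z11 ?z13 ?z14 ?z22 ?z20 ?z24 in E0.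
have E1 := Gl hD o3 o4 o4; rewrite !sum5 !b2F_nat /alpha5 !mxE /= ?b2FT ?b2FF in E1.
rewrite ?z01 ?z10 ?z12 ?z21 ?z23 ?z32 ?z03 ?z02 ?z00 ?z04 ?z11 ?z13 ?z14 ?z22 ?z20 ?z24 in E1.
have z31 : dd D o3 o1 = 0.
  apply: (nz hp); apply: (lc2 (-1) (1) E0 E1); field; exact: hchar.
clear E0 E1.
have E0 := Gl hD o3 o1 o1; rewrite !sum5 !b2F_nat /alpha5 !mxE /= ?b2FT ?b2FF in E0.
rewrite ?z01 ?z10 ?z12 ?z21 ?z23 ?z32 ?z03 ?z02 ?z00 ?z04 ?z11 ?z13 ?z14 ?z22 ?z20 ?z24 ?z31 in E0.
have E1 := Gl hD o3 o4 o4; rewrite !sum5 !b2F_nat /alpha5 !mxE /= ?b2FT ?b2FF in E1.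
rewrite ?z01 ?z10 ?z12 ?z21 ?z23 ?z32 ?z03 ?z02 ?z00 ?z04 ?z11 ?z13 ?z14 ?z22 ?z20 ?z24 ?z31 in E1.
have z30 : dd D o3 o0 = 0.
  apply: (nz hp); apply: (lc2 (1) (-1) E0 E1); field; exact: hchar.
clear E0 E1.
have E0 := Gl hD o3 o2 o2; rewrite !sum5 !b2F_nat /alpha5 !mxE /= ?b2FT ?b2FF in E0.
rewrite ?z01 ?z10 ?z12 ?z21 ?z23 ?z32 ?z03 ?z02 ?z00 ?z04 ?z11 ?z13 ?z14 ?z22 ?z20 ?z24 ?z31 ?z30 in E0.
have E1 := Gl hD o3 o4 o4; rewrite !sum5 !b2F_nat /alpha5 !mxE /= ?b2FT ?b2FF in E1.
rewrite ?z01 ?z10 ?z12 ?z21 ?z23 ?z32 ?z03 ?z02 ?z00 ?z04 ?z11 ?z13 ?z14 ?z22 ?z20 ?z24 ?z31 ?z30 in E1.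
have z33 : dd D o3 o3 = 0.
  apply: (nz hr); apply: (lc2 (-1) (1) E0 E1); field; exact: hchar.
clear E0 E1.
have E0 := Gl hD o3 o4 o4; rewrite !sum5 !b2F_nat /alpha5 !mxE /= ?b2FT ?b2FF in E0.
rewrite ?z01 ?z10 ?z12 ?z21 ?z23 ?z32 ?z03 ?z02 ?z00 ?z04 ?z11 ?z13 ?z14 ?z22 ?z20 ?z24 ?z31 ?z30 ?z33 in E0.
have z34 : dd D o3 o4 = 0.
  apply: (nz h1); apply: (lc1 (-2) E0); field; exact: hchar.
clear E0.
have E0 := Gl hD o4 o0 o0; rewrite !sum5 !b2F_nat /alpha5 !mxE /= ?b2FT ?b2FF in E0.
rewrite ?z01 ?z10 ?z12 ?z21 ?z23 ?z32 ?z03 ?z02 ?z00 ?z04 ?z11 ?z13 ?z14 ?z22 ?z20 ?z24 ?z31 ?z30 ?z33 ?z34 in E0.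
have E1 := Gl hD o4 o4 o4; rewrite !sum5 !b2F_nat /alpha5 !mxE /= ?b2FT ?b2FF in E1.
rewrite ?z01 ?z10 ?z12 ?z21 ?z23 ?z32 ?z03 ?z02 ?z00 ?z04 ?z11 ?z13 ?z14 ?z22 ?z20 ?z24 ?z31 ?z30 ?z33 ?z34 in E1.
have z41 : dd D o4 o1 = 0.
  apply: (nz hp); apply: (lc2 (-1) (2^-1) E0 E1); field; exact: hchar.
clear E0 E1.
have E0 := Gl hD o4 o2 o2; rewrite !sum5 !b2F_nat /alpha5 !mxE /= ?b2FT ?b2FF in E0.
rewrite ?z01 ?z10 ?z12 ?z21 ?z23 ?z32 ?z03 ?z02 ?z00 ?z04 ?z11 ?z13 ?z14 ?z22 ?z20 ?z24 ?z31 ?z30 ?z33 ?z34 ?z41 in E0.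
have E1 := Gl hD o4 o4 o4; rewrite !sum5 !b2F_nat /alpha5 !mxE /= ?b2FT ?b2FF in E1.
rewrite ?z01 ?z10 ?z12 ?z21 ?z23 ?z32 ?z03 ?z02 ?z00 ?z04 ?z11 ?z13 ?z14 ?z22 ?z20 ?z24 ?z31 ?z30 ?z33 ?z34 ?z41 in E1.
have z43 : dd D o4 o3 = 0.
  apply: (nz hr); apply: (lc2 (-1) (2^-1) E0 E1); field; exact: hchar.
clear E0 E1.
have E0 := Gl hD o4 o3 o3; rewrite !sum5 !b2F_nat /alpha5 !mxE /= ?b2FT ?b2FF in E0.
rewrite ?z01 ?z10 ?z12 ?z21 ?z23 ?z32 ?z03 ?z02 ?z00 ?z04 ?z11 ?z13 ?z14 ?z22 ?z20 ?z24 ?z31 ?z30 ?z33 ?z34 ?z41 ?z43 in E0.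
have E1 := Gl hD o4 o4 o4; rewrite !sum5 !b2F_nat /alpha5 !mxE /= ?b2FT ?b2FF in E1.
rewrite ?z01 ?z10 ?z12 ?z21 ?z23 ?z32 ?z03 ?z02 ?z00 ?z04 ?z11 ?z13 ?z14 ?z22 ?z20 ?z24 ?z31 ?z30 ?z33 ?z34 ?z41 ?z43 in E1.
have z42 : dd D o4 o2 = 0.
  apply: (nz hr); apply: (lc2 (1) (-2^-1) E0 E1); field; exact: hchar.
clear E0 E1.
have E0 := Gl hD o4 o1 o1; rewrite !sum5 !b2F_nat /alpha5 !mxE /= ?b2FT ?b2FF in E0.
rewrite ?z01 ?z10 ?z12 ?z21 ?z23 ?z32 ?z03 ?z02 ?z00 ?z04 ?z11 ?z13 ?z14 ?z22 ?z20 ?z24 ?z31 ?z30 ?z33 ?z34 ?z41 ?z43 ?z42 in E0.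
have E1 := Gl hD o4 o4 o4; rewrite !sum5 !b2F_nat /alpha5 !mxE /= ?b2FT ?b2FF in E1.
rewrite ?z01 ?z10 ?z12 ?z21 ?z23 ?z32 ?z03 ?z02 ?z00 ?z04 ?z11 ?z13 ?z14 ?z22 ?z20 ?z24 ?z31 ?z30 ?z33 ?z34 ?z41 ?z43 ?z42 in E1.
have z40 : dd D o4 o0 = 0.
  apply: (nz hp); apply: (lc2 (1) (-2^-1) E0 E1); field; exact: hchar.
clear E0 E1.
have E0 := Gl hD o4 o4 o4; rewrite !sum5 !b2F_nat /alpha5 !mxE /= ?b2FT ?b2FF in E0.
rewrite ?z01 ?z10 ?z12 ?z21 ?z23 ?z32 ?z03 ?z02 ?z00 ?z04 ?z11 ?z13 ?z14 ?z22 ?z20 ?z24 ?z31 ?z30 ?z33 ?z34 ?z41 ?z43 ?z42 ?z40 in E0.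
have z44 : dd D o4 o4 = 0.
  apply: (nz h1); apply: (lc1 (-1) E0); field; exact: hchar.
clear E0.
have he : forall i, D (e5 F i) = 0.
  move=> i; apply/rowP => k; rewrite mxE -/(dd D i k).
  by case: (ord5 i) => [->|[->|[->|[->|->]]]]; case: (ord5 k) => [->|[->|[->|[->|->]]]].
case: hD => [hadd [hsc _]] u.
rewrite (row_sum_delta u) sum5 !hadd !hsc.
rewrite -!/(e5 F _) !he !scaler0 !addr0.
done.
Qed.
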